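(* Let $d\ge2$, $L\ge1$ an integer and $0<x<\frac{1}{(2d-1)!}$. Let $\Gamma\subset B_L=[0,L)^d\cap\mathbb Z^d$ be such that for every $i\in\{1,\dots,d\}$, $\Gamma$ contains (entirely) at least $(1-x)L^{d-1}$ columns of $B_L$ parallel to $e_i$. Then $\Gamma$ contains a connected subset (for the nearest-neighbour graph of $\mathbb Z^d$) of cardinality at least $(1-(2d-1)!\,x)L^d$.
   Context: $e_1,\dots,e_d$ is the standard basis of $\mathbb Z^d$. A column of $B_L$ parallel to $e_i$ is a set of the form $\{y\in B_L: y_j=a_j\text{ for all }j\neq i\}$ for fixed integers $(a_j)_{j\neq i}$ with $0\le a_j<L$. *)

(* Defs.v *)
From HB Require Import structures.
From mathcomp Require Import all_boot all_order all_algebra.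
From mathcomp Require Import reals.
Set Implicit Arguments. Unset Strict Implicit. Unset Printing Implicit Defensive.

Definition point (d L : nat) := {ffun 'I_d -> 'I_L}.

(* Nearest-neighbour adjacency of Z^d: l1-distance exactly 1. *)
Definition nn_adj (d L : nat) (y z : point d L) : bool :=
  (\sum_(j < d) ((y j - z j) + (z j - y j)))%N == 1%N.

Definition column (d L : nat) (i : 'I_d) (a : point d L) : {set point d L} :=
  [set y : point d L | [forall j : 'I_d, (j != i) ==> (y j == a j)]].

Definition columns_in (d L : nat) (i : 'I_d) (G : {set point d L})
  : {set {set point d L}} :=
  [set column i a | a in [pred a : point d L | column i a \subset G]].

Definition nn_connected (d L : nat) (S : {set point d L}) : Prop :=
  forall u v, u \in S -> v \in S ->
    connect (fun y z => [&& y \in S, z \in S & nn_adj y z]) u v.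

(* Main.v *)
Require Import Defs.
From HB Require Import structures.
From mathcomp Require Import all_boot all_order all_algebra.
From mathcomp Require Import reals ring lra zify.
Import Order.TTheory GRing.Theory Num.Theory.
Local Open Scope ring_scope.
Set Implicit Arguments. Unset Strict Implicit. Unset Printing Implicit Defensive.

Lemma card_point d L : #|point d L| = (L ^ d)%N.
Proof. by rewrite /point card_ffun !card_ord. Qed.

Lemma column_same d L (i : 'I_d) (a b : point d L) :
  (forall j, j != i -> a j = b j) -> column i a = column i b.
Proof.
move=> h; apply/setP=> z; rewrite !inE; apply/forallP/forallP=> H j;
  apply/implyP=> ji; have /implyP/(_ ji)/eqP -> := H j; by rewrite (h j ji).
Qed.

Lemma mem_column_self d L (i : 'I_d) (a : point d L) : a \in column i a.
Proof. by rewrite inE; apply/forallP=> j; apply/implyP. Qed.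

Definition good d L (i : 'I_d) (G : {set point d L}) :=
  [set y : point d L | column i y \subset G].

Lemma good_ge d L (i : 'I_d) (G : {set point d L}) :
  (#|columns_in i G| * L <= #|good i G|)%N.
Proof.
pose f (y : point d L) := (column i y, y i).
have : setX (columns_in i G) [set: 'I_L] \subset f @: good i G.
  apply/subsetP=> [[C t]]; rewrite inE /= in_setT andbT.
  case/imsetP=> a; rewrite inE => Ha ->.
  pose a' : point d L := [ffun j => if j == i then t else a j].
  have ea : column i a' = column i a.
    by apply: column_same=> j /negbTE ji; rewrite /a' ffunE ji.
  apply/imsetP; exists a'; first by rewrite inE ea.
  by rewrite /f ea /a' ffunE eqxx.
move/subset_leq_card; rewrite cardsX cardsT card_ord => h.
exact: leq_trans h (leq_imset_card _ _).
Qed.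
Definition erel d L (S : {set point d L}) :=
  fun y z : point d L => [&& y \in S, z \in S & nn_adj y z].

Lemma erel_sym d L (S : {set point d L}) : symmetric (erel S).
Proof.
move=> y z; rewrite /erel /nn_adj andbCA.
by rewrite (eq_bigr (fun j => (z j - y j) + (y j - z j))%N) // => j _; rewrite addnC.
Qed.

Lemma line_connect d L (i : 'I_d) (c : point d L) (S : {set point d L}) :
  column i c \subset S -> forall a b, a \in column i c -> b \in column i c ->
  connect (erel S) a b.
Proof.
move=> cS.
pose q (t : nat) : point d L :=
  [ffun j => if j == i then insubd (c i) t else c j].
have qcol t : q t \in column i c.
  rewrite inE; apply/forallP=> j; apply/implyP=> /negbTE ji.
  by rewrite /q ffunE ji.
have qa a : a \in column i c -> a = q (a i).
  rewrite inE => /forallP H; apply/ffunP=> j; rewrite /q ffunE.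
  case: (eqVneq j i) => [->|ji].
    by apply: val_inj; rewrite val_insubd ltn_ord.
  by have /implyP/(_ ji)/eqP := H j.
have qv t : (t < L)%N -> val (q t i) = t.
  by move=> tL; rewrite /q ffunE eqxx val_insubd tL.
have q0 t : (t < L)%N -> connect (erel S) (q t) (q 0).
  elim: t => [|t IH] tL; first exact: connect0.
  apply: connect_trans (IH (ltnW tL)); apply: connect1.
  rewrite /erel !(subsetP cS) //= /nn_adj (bigD1 i) //= (qv _ tL) (qv _ (ltnW tL)).
  have -> : (t - t.+1 = 0)%N by apply/eqP; rewrite subn_eq0.
  rewrite big1 ?subSnn // => j ji.
  by rewrite /q !ffunE (negbTE ji) subnn.
have symc := sym_connect_sym (erel_sym S).
move=> a b /qa -> /qa ->.
apply: connect_trans (q0 _ (ltn_ord _)) _.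
by rewrite symc; apply: q0.
Qed.
Lemma card_ind (T : finType) (A : {set T}) : \sum_(y : T) (y \in A : nat) = #|A|.
Proof.
rewrite -sum1_card [RHS]big_mkcond /=; apply: eq_bigr => y _; by case: (y \in A).
Qed.

Lemma exists_min (I : finType) (i0 : I) (F : I -> nat) :
  exists i, (#|I| * F i <= \sum_j F j)%N.
Proof.
have [i _ Hi] := @arg_minnP I i0 xpredT F isT.
exists i; rewrite -sum_nat_const; apply: leq_sum => j _; exact: Hi.
Qed.

Definition pk d L (k : nat) (y r : point d L) : point d L :=
  [ffun j : 'I_d => if (j < k)%N then r j else y j].

Definition bad d L (i : 'I_d) (G : {set point d L}) :=
  ~: [set y : point d L | column i y \subset G].

Lemma count_k d L (k : 'I_d) (G : {set point d L}) :
  (\sum_(r : point d L) \sum_(y : point d L) (pk k y r \in bad k G : nat)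
   = #|point d L| * #|bad k G|)%N.
Proof.
pose h (p : point d L * point d L) := (pk k p.1 p.2, pk k p.2 p.1).
have hK : forall p, h (h p) = p.
  move=> [r y]; rewrite /h /=; congr (_, _); apply/ffunP=> j; rewrite !ffunE;
  by case: (j < k)%N.
rewrite pair_bigA /=.
rewrite (eq_bigr (fun p => ((h p).2 \in bad k G) : nat)) //.
rewrite [LHS](_ : _ = \sum_(p : point d L * point d L) (p.2 \in bad k G : nat));
  last by rewrite [RHS](reindex_inj (inv_inj hK)).
rewrite -(pair_bigA _ (fun r y => (y \in bad k G : nat))) /=.
rewrite (eq_bigr (fun _ => #|bad k G|)); last by move=> r _; exact: card_ind.
by rewrite sum_nat_const.
Qed.

Lemma bad_bound (R : realType) d L (x : R) (k : 'I_d) (G : {set point d L})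
  (hd : (1 <= d)%N)
  (h : (1 - x) * (L ^ (d - 1))%:R <= (#|columns_in k G|)%:R) :
  (#|bad k G|)%:R <= x * (L ^ d)%:R.
Proof.
have hc := cardsC [set y : point d L | column k y \subset G].
rewrite card_point in hc.
have hg := good_ge k G; rewrite /good in hg.
have eL : (L ^ d = L ^ (d - 1) * L)%N by rewrite -expnSr subn1 prednK.
rewrite /bad.
have -> : (#|~: [set y : point d L | column k y \subset G]|)%:R =
   (L ^ d)%:R - (#|[set y : point d L | column k y \subset G]|)%:R :> R.
  by rewrite -hc natrD addrAC subrr add0r.
have : ((#|columns_in k G| * L)%:R <= (#|[set y : point d L | column k y \subset G]|)%:R :> R).
  by rewrite ler_nat.
rewrite natrM eL natrM => hg'.
have hL0 : 0 <= (L%:R : R) by [].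
have := ler_wpM2r hL0 h.
nra.
Qed.

Theorem lemma6p1 (R : realType) (d L : nat) (x : R)
  (hd : (2 <= d)%N) (hL : (1 <= L)%N)
  (hx0 : 0 < x) (hx1 : x < 1 / ((2 * d - 1)`!)%:R)
  (G : {set point d L})
  (hcol : forall i : 'I_d,
     (1 - x) * (L ^ (d - 1))%:R <= (#|columns_in i G|)%:R) :
  exists S : {set point d L},
    [/\ S \subset G, nn_connected S &
        (1 - ((2 * d - 1)`!)%:R * x) * (L ^ d)%:R <= (#|S|)%:R].
Proof.
have hd1 : (1 <= d)%N by apply: leq_trans hd.
have hd0 : (0 < d)%N by [].
pose N := (L ^ d)%N.
have hN : #|point d L| = N by rewrite card_point.
pose fail (r y : point d L) := [exists k : 'I_d, pk k y r \in bad k G].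
pose s r := (\sum_y (fail r y : nat))%N.
have hT : (\sum_r s r <= \sum_(k < d) (N * #|bad k G|))%N.
  apply: (@leq_trans (\sum_r \sum_y \sum_(k < d) (pk k y r \in bad k G : nat))%N).
    apply: leq_sum => r _; apply: leq_sum => y _.
    rewrite /fail; case: existsP => [[k hk]|_] //.
    by rewrite (bigD1 k) //= hk leq_addr.
  rewrite [leqRHS](_ : _ = \sum_(k < d) \sum_r \sum_y (pk k y r \in bad k G : nat))%N.
    rewrite [leqRHS]exchange_big /=; apply: leq_sum => r _; by rewrite [leqRHS]exchange_big.
  by apply: eq_bigr => k _; rewrite count_k hN.
have [r hr] := exists_min ([ffun _ => Ordinal hL] : point d L) s.
rewrite hN in hr.
pose S := [set z | [exists y, ~~ fail r y &&
                    [exists k : 'I_d, z \in column k (pk k y r)]]].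
have colS y (k : 'I_d) : ~~ fail r y -> column k (pk k y r) \subset S.
  move=> nf; apply/subsetP=> z hz; rewrite inE; apply/existsP; exists y.
  by rewrite nf; apply/existsP; exists k.
have symc := sym_connect_sym (erel_sym S).
have toR y : ~~ fail r y -> forall m, (m <= d)%N ->
    connect (erel S) (pk (d - m) y r) r.
  move=> nf; elim=> [|m IH] hm.
    rewrite subn0 (_ : pk d y r = r); first exact: connect0.
    by apply/ffunP=> j; rewrite ffunE ltn_ord.
  have klt : (d - m.+1 < d)%N by rewrite ltn_subrL /= hd0.
  pose K : 'I_d := Ordinal klt.
  apply: connect_trans (IH (ltnW hm)).
  apply: (line_connect (colS y K nf)); first exact: mem_column_self.
  rewrite inE; apply/forallP=> j; apply/implyP=> jK; rewrite !ffunE /=.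
  rewrite -(subnSK hm) ltnS leq_eqVlt.
  have -> : (nat_of_ord j == d - m.+1)%N = false.
    by apply/negbTE; move: jK; apply: contra => /eqP e; apply/eqP/val_inj.
  by [].
have toR' u : u \in S -> connect (erel S) u r.
  rewrite inE => /existsP [y /andP [nf /existsP [k hk]]].
  apply: connect_trans (_ : connect (erel S) (pk k y r) r).
    exact: (line_connect (colS y k nf) hk (mem_column_self _ _)).
  have := toR y nf (d - k)%N (leq_subr _ _).
  by rewrite subKn // ltnW.
exists S; split.
- apply/subsetP=> z; rewrite inE => /existsP [y /andP [nf /existsP [k hk]]].
  move/existsPn: nf => /(_ k); rewrite /bad inE negbK inE => /subsetP; exact.
- move=> u v hu hv; apply: connect_trans (toR' u hu) _.
  by rewrite symc; exact: toR'.
have hsub : [set y | ~~ fail r y] \subset S.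
  apply/subsetP=> y; rewrite inE => nf; rewrite inE; apply/existsP; exists y.
  rewrite nf /=; apply/existsP; exists (Ordinal hd0).
  rewrite (_ : pk _ y r = y) ?mem_column_self //.
  by apply/ffunP=> j; rewrite ffunE ltn0.
have hcard : (#|[set y | ~~ fail r y]| + s r = N)%N.
  rewrite -hN -(cardsC [set y | ~~ fail r y]); congr (_ + _).
  rewrite /s -card_ind; by apply: eq_bigr => y _; rewrite !inE negbK.
have hS : ((#|[set y | ~~ fail r y]|)%:R <= (#|S|)%:R :> R).
  by rewrite ler_nat; exact: subset_leq_card.
have hNpos : (0 : R) < N%:R by rewrite ltr0n expn_gt0 hL.
have hbad : forall k : 'I_d, (#|bad k G|)%:R <= x * N%:R.
  by move=> k; apply: bad_bound.
have hT' : (N%:R * (s r)%:R <= N%:R * (d%:R * (x * N%:R)) :> R).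
  rewrite -natrM; apply: (@le_trans _ _ ((\sum_r s r)%N)%:R).
    by rewrite ler_nat.
  apply: (@le_trans _ _ ((\sum_(k < d) (N * #|bad k G|))%N)%:R).
    by rewrite ler_nat.
  rewrite natr_sum (@le_trans _ _ (\sum_(k < d) (N%:R * (x * N%:R)))) //.
    by apply: ler_sum => k _; rewrite natrM; apply: ler_wpM2l.
  rewrite sumr_const card_ord -mulr_natr; rewrite le_eqVlt; apply/orP; left; apply/eqP; ring.
have hs : ((s r)%:R <= d%:R * (x * N%:R) :> R).
  by rewrite -(ler_pM2l hNpos).
have hF : (d%:R <= ((2 * d - 1)`!)%:R :> R).
  rewrite ler_nat; apply: leq_trans (fact_geq _); lia.
have hcR : ((#|[set y | ~~ fail r y]|)%:R + (s r)%:R = N%:R :> R).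
  by rewrite -natrD hcard.
have hxN : 0 <= x * N%:R by rewrite mulr_ge0 // ltW.
have := ler_wpM2r hxN hF.
rewrite /N in hS hs hcR hxN * => hF'.
nra.
Qed.
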